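(* Consider binary node classification with classes $\{0,1\}$, let $k\in\{0,1\}$, and let $c_0,c_1\in(0,1)$ be the class homophily parameters. Assume the classes are balanced ($P(\hat{Y}=0)=P(\hat{Y}=1)$), the graph is heterophilic ($c_k<1-c_{1-k}$), and $0<c_k<0.5$. If two nodes $n$ and $m$ have degrees $d_n>d_m$ and $|\mathcal{N}_k(n)| = |\mathcal{N}_k(m)|$ (so that $|\mathcal{N}_{1-k}(n)| > |\mathcal{N}_{1-k}(m)|$), then $$P\big(\hat{Y}_{n} = k \mid \{Y_j\}_{j\in\mathcal{N}(n)}\big) > P\big(\hat{Y}_{m} = k \mid \{Y_j\}_{j\in\mathcal{N}(m)}\big).$$
   Context: Model: each node $i$ has a (latent/soft) class $\hat{Y}_i\in\{0,1\}$, and each neighbor $j\in\mathcal{N}(i)$ has an observed label $Y_j\in\{0,1\}$. Given $\hat{Y}_i$, the neighbor labels are conditionally independent with $P(Y_j=k\mid \hat{Y}_i=k)=c_k$ and $P(Y_j=1-k\mid\hat{Y}_i=k)=1-c_k$ for $k\in\{0,1\}$ ($c_k$ is the class homophily of class $k$). The posterior is obtained by Bayes' rule: $P(\hat Y_i=k\mid\{Y_j=y_j\}_{j\in\mathcal N(i)})\propto P(\hat Y_i=k)\prod_{j\in\mathcal N(i)}P(Y_j=y_j\mid \hat Y_i=k)$, conditioning on the observed neighbor labels. Notation: $\mathcal{N}_k(i)=\{j\in\mathcal{N}(i): y_j=k\}$, $\mathcal{N}_{1-k}(i)=\{j\in\mathcal{N}(i): y_j=1-k\}$, and the degree of $i$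 is $d_i=|\mathcal N(i)|=|\mathcal{N}_k(i)|+|\mathcal{N}_{1-k}(i)|$. *)

(* Defs.v *)
(* Classes {0,1} are encoded as bool: false = 0, true = 1;
   the "other class" 1-k is ~~ k. *)
From mathcomp Require Import all_boot all_order all_algebra.
Set Implicit Arguments. Unset Strict Implicit. Unset Printing Implicit Defensive.
Import Order.TTheory GRing.Theory Num.Theory.
Local Open Scope ring_scope.

(* P(Y_j = y | Yhat_i = yh): c_yh if y = yh, 1 - c_yh otherwise. *)
Definition neigh_lik {R : realFieldType} (c : bool -> R) (yh y : bool) : R :=
  if y == yh then c yh else 1 - c yh.

(* Joint term P(Yhat_i = yh) * prod_j P(Y_j = y_j | Yhat_i = yh),
   neighbor labels given as the sequence ys (its size is the degree). *)
Definition joint {R : realFieldType} (prior : bool -> R) (c : bool -> R)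
  (ys : seq bool) (yh : bool) : R :=
  prior yh * \prod_(y <- ys) neigh_lik c yh y.

(* Bayes posterior P(Yhat_i = k | {Y_j = y_j}_{j in N(i)}). *)
Definition posterior {R : realFieldType} (prior : bool -> R) (c : bool -> R)
  (ys : seq bool) (k : bool) : R :=
  joint prior c ys k / \sum_(l : bool) joint prior c ys l.

Definition nb_class (ys : seq bool) (k : bool) : nat := count (fun y => y == k) ys.

(* Main.v *)
Require Import Defs.
From mathcomp Require Import all_boot all_order all_algebra.
From mathcomp Require Import ring lra.
Import Order.TTheory GRing.Theory Num.Theory.
Local Open Scope ring_scope.

Lemma prod_lik (R : realFieldType) (c : bool -> R) yh ys :
  \prod_(y <- ys) neigh_lik c yh y =
  c yh ^+ count (fun y => y == yh) ys * (1 - c yh) ^+ count (fun y => y != yh) ys.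
Proof.
elim: ys => [|y ys IH]; first by rewrite big_nil mulr1.
rewrite big_cons IH /neigh_lik /=.
case: (y == yh) => /=; rewrite ?add1n ?add0n !exprS; ring.
Qed.

Lemma count_neg (ys : seq bool) k :
  count (fun y => y == ~~ k) ys = count (fun y => y != k) ys /\
  count (fun y => y != ~~ k) ys = count (fun y => y == k) ys.
Proof. by split; apply: eq_count => y; case: y; case: k. Qed.

Lemma frac_lt (R : realFieldType) (A B A' B' : R) :
  0 < A -> 0 < B -> 0 < A' -> 0 < B' -> A' * B < A * B' ->
  A' / (A' + B') < A / (A + B).
Proof.
move=> hA hB hA' hB' h.
rewrite ltr_pdivrMr ?addr_gt0 // mulrAC ltr_pdivlMr ?addr_gt0 //.
nra.
Qed.

Theorem mainTheorem4 (R : realFieldType) (prior c : bool -> R) (k : bool)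
  (ys_n ys_m : seq bool) :
  (forall l, 0 <= prior l) -> prior false + prior true = 1 ->
  prior false = prior true ->
  (forall l, 0 < c l < 1) ->
  c k < 1 - c (~~ k) ->
  0 < c k < 1 / 2 ->
  (size ys_m < size ys_n)%N ->
  nb_class ys_n k = nb_class ys_m k ->
  posterior prior c ys_n k > posterior prior c ys_m k.
Proof.
move=> _ hs he hc hh _ hsz hcnt.
have hp : prior k = 1/2 /\ prior (~~ k) = 1/2.
  by case: k {hh hcnt}; simpl; split; lra.
case: hp => hpk hpk'.
have hsum : forall ys, \sum_(l : bool) joint prior c ys l
    = joint prior c ys k + joint prior c ys (~~ k).
  by move=> ys; rewrite big_bool; case: k {hh hcnt hpk hpk'} => //=; rewrite addrC.
rewrite /posterior !hsum /joint !prod_lik.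
have [e1n e2n] := count_neg ys_n k.
have [e1m e2m] := count_neg ys_m k.
rewrite e1n e2n e1m e2m /=.
move: hcnt; rewrite /nb_class => hcnt; rewrite hcnt.
set a := count (fun y => y == k) ys_m.
have hbn := count_predC (fun y => y == k) ys_n.
have hbm := count_predC (fun y => y == k) ys_m.
set bn := count (fun y => y != k) ys_n.
set bm := count (fun y => y != k) ys_m.
have hb : (bm < bn)%N.
  have -> : bn = count (predC (fun y => y == k)) ys_n by [].
  have -> : bm = count (predC (fun y => y == k)) ys_m by [].
  move: hsz; rewrite -hbn -hbm hcnt -/a => /=; rewrite ltn_add2l //.
have [d ->] : exists d, bn = (bm + d.+1)%N.
  by exists (bn - bm).-1; rewrite prednK ?subn_gt0 // subnKC // ltnW.
set x := c k; set y := c (~~ k).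
have hx := hc k; have hy := hc (~~ k).
rewrite -/x -/y in hx hy hh.
have hu : y ^+ d.+1 < (1 - x) ^+ d.+1.
  by rewrite ltrXn2r //; lra.
have hv : 0 < y ^+ d.+1 by apply: exprn_gt0; lra.
have hX : 0 < x ^+ a * (1 - x) ^+ bm by apply: mulr_gt0; apply: exprn_gt0; lra.
have hY : 0 < (1 - y) ^+ a * y ^+ bm by apply: mulr_gt0; apply: exprn_gt0; lra.
rewrite !exprD.
set X := x ^+ a * (1 - x) ^+ bm in hX *.
set Y := (1 - y) ^+ a * y ^+ bm in hY *.
set u := (1 - x) ^+ d.+1 in hu *.
set v := y ^+ d.+1 in hu hv *.
rewrite hpk hpk'.
have -> : 1 / 2 * (x ^+ a * ((1 - x) ^+ bm * u)) = 1/2 * X * u by rewrite /X; ring.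
have -> : 1 / 2 * (y ^+ bm * v * (1 - y) ^+ a) = 1/2 * Y * v by rewrite /Y; ring.
have -> : 1 / 2 * (x ^+ a * (1 - x) ^+ bm) = 1/2 * X by [].
have -> : 1 / 2 * (y ^+ bm * (1 - y) ^+ a) = 1/2 * Y by rewrite /Y; ring.
have hXu : 0 < X * u by apply: mulr_gt0; lra.
have hYv : 0 < Y * v by apply: mulr_gt0; lra.
apply: frac_lt; try nra.
have : X * Y * v < X * Y * u by rewrite ltr_pM2l //; nra.
nra.
Qed.
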